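(* Every program $P$ of the reactive language defined in the context is deterministic: coinductively, for every set of input signals $I\subseteq \mathit{Int}$, if $P\xrightarrow{I/O_1}P_1$ and $P\xrightarrow{I/O_2}P_2$, then $O_1=O_2$, $P_1$ and $P_2$ are equal up to renaming, and $P_1$ is again deterministic in the same sense.
   Context: Fix a countable set of signal names $s,s',\dots$ and a finite set $\mathit{Int}$ of signal names (the observable interface). A signal environment $E$ is a partial function from signal names to $\{\mathit{true},\mathit{false}\}$ whose finite domain $\mathrm{dom}(E)$ contains $\mathit{Int}$; $E[s:=\mathit{true}]$ denotes update. Threads are given by the grammar $T ::= () \mid (\mathsf{emit}\ s) \mid (\mathsf{local}\ s\ T) \mid (\mathsf{thread}\ T) \mid (\mathsf{when}\ s\ T) \mid (\mathsf{watch}\ s\ T) \mid A(\vec s) \mid (T;T)$, where $A(\vec s)$ are thread identifiers with signal parameters, each defined by exactly one equation $A(\vec x)=T$; $\mathsf{local}\ s$ binds $s$ in $T$. $\mathrm{sig}(T)$ is the set of free signals of $T$, and $\mathrm{sig}(P)$ the union over threads of a multiset $P$. A program is a finite non-empty multiset of threads. Atomic thread execution $(T,E)\Rightarrow_P (T',E')$ ($P$ a multiset of spawned threads, $\cup$ multiset union) is the least relation closed under: (T1) $((),E)\Rightarrow_\emptyset((),E)$; (T2) $(\mathsf{emit}\ s,E)\Rightarrow_\emptyset((),E[s:=\mathit{true}])$; (T3) if $s'\notin\mathrm{dom}(E)$ and $([s'/s]T,E\cup\{s'\mapsto\mathit{false}\})\Rightarrow_P(T',E')$ then $(\mathsf{local}\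 s\ T,E)\Rightarrow_P(T',E')$; (T4) $(\mathsf{thread}\ T,E)\Rightarrow_{\{T\}}((),E)$; (T5) if $A(\vec x)=T$ and $([\vec s/\vec x]T,E)\Rightarrow_P(T',E')$ then $(A(\vec s),E)\Rightarrow_P(T',E')$; (T6) if $E(s)=\mathit{false}$ then $(\mathsf{when}\ s\ T,E)\Rightarrow_\emptyset(\mathsf{when}\ s\ T,E)$; (T7) if $E(s)=\mathit{true}$ and $(T,E)\Rightarrow_P((),E')$ then $(\mathsf{when}\ s\ T,E)\Rightarrow_P((),E')$; (T8) if $E(s)=\mathit{true}$, $(T,E)\Rightarrow_P(T',E')$, $T'\neq()$ then $(\mathsf{when}\ s\ T,E)\Rightarrow_P(\mathsf{when}\ s\ T',E')$; (T9) if $(T,E)\Rightarrow_P((),E')$ then $(\mathsf{watch}\ s\ T,E)\Rightarrow_P((),E')$; (T10) if $(T,E)\Rightarrow_P(T',E')$, $T'\neq()$ then $(\mathsf{watch}\ s\ T,E)\Rightarrow_P(\mathsf{watch}\ s\ T',E')$; (T11) if $(T_1,E)\Rightarrow_{P_1}((),E_1)$ and $(T_2,E_1)\Rightarrow_{P_2}(T',E')$ then $(T_1;T_2,E)\Rightarrow_{P_1\cup P_2}(T',E')$; (T12) if $(T_1,E)\Rightarrow_P(T',E')$, $T'\neq()$ then $(T_1;T_2,E)\Rightarrow_P(T';T_2,E')$. $(T,E)$ is stuck, written $(T,E)\ddagger$, if $(T,E)\Rightarrow_\emptyset(T,E)$. The end-of-instant abort function: $\lfloor P\rfloor_E=\{\lfloor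 T\rfloor_E\mid T\in P\}$ (multiset), $\lfloor()\rfloor_E=()$, $\lfloor T;T'\rfloor_E=\lfloor T\rfloor_E;T'$, $\lfloor\mathsf{when}\ s\ T\rfloor_E=\mathsf{when}\ s\ \lfloor T\rfloor_E$ if $E(s)=\mathit{true}$ and $\mathsf{when}\ s\ T$ otherwise, $\lfloor\mathsf{watch}\ s\ T\rfloor_E=()$ if $E(s)=\mathit{true}$ and $\mathsf{watch}\ s\ \lfloor T\rfloor_E$ otherwise. Instant execution $(P,E)\Downarrow(P'',E'')$ is the least relation with: (P1) if $(T,E)\ddagger$ for all $T\in P$ then $(P,E)\Downarrow(\lfloor P\rfloor_E,E)$; (P2) if some $T\in P$ has $\neg(T,E)\ddagger$, $(T,E)\Rightarrow_{P'}(T',E')$ and $((P\setminus\{T\})\cup\{T'\}\cup P',E')\Downarrow(P'',E'')$, then $(P,E)\Downarrow(P'',E'')$ (the choice of $T$ is nondeterministic). Input/output transitions: for $I,O\subseteq\mathit{Int}$, $P\xrightarrow{I/O}P'$ iff $(P,E_{I,P})\Downarrow(P',E')$ and $O=\{s\in\mathit{Int}\mid E'(s)=\mathit{true}\}$, where $E_{I,P}(s)=\mathit{true}$ if $s\in I$, $\mathit{false}$ if $s\in(\mathit{Int}\cup\mathrm{sig}(P))\setminus I$, undefined otherwise. Two programs $P,P'$ are equal up to renaming if there is a bijection $\mathrm{sig}(P)\to\mathrm{sig}(P')$ that is the identity on $\mathit{Int}$ and whose application to $P$ yields $P'$. A program $P$ is deterministic (coinductive definition: the greatest predicate such that) for every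 $I$, whenever $P\xrightarrow{I/O_1}P_1$ and $P\xrightarrow{I/O_2}P_2$, then $O_1=O_2$, $P_1=P_2$ up to renaming, and $P_1$ is deterministic. *)

(* Defs.v *)
From Stdlib Require Import List Arith Bool Permutation.
Import ListNotations.

Definition signal := nat.

(* Locally nameless syntax: free signals are names [FV s], signals bound by
   [local] are de Bruijn indices [BV n] (terms are thus identified up to
   alpha-conversion, and [s'/s]T in rule (T3) is capture-free opening). *)
Inductive sname : Type :=
| FV (s : signal)
| BV (n : nat).

Inductive thread : Type :=
| TNil
| TEmit (s : sname)
| TLocal (T : thread)
| TThread (T : thread)
| TWhen (s : sname) (T : thread)
| TWatch (s : sname) (T : thread)
| TCall (A : nat) (args : list sname)
| TSeq (T1 T2 : thread).

(* A program / multiset of threads is a list considered up to permutation. *)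
Definition program := list thread.

(* Definitions of thread identifiers: A(xs) = body, with xs = fst (D A). *)
Definition defs := nat -> (list signal * thread).

Definition fsn (x : sname) : list signal :=
  match x with FV s => [s] | BV _ => [] end.

Fixpoint fsig (T : thread) : list signal :=
  match T with
  | TNil => []
  | TEmit s => fsn s
  | TLocal T => fsig T
  | TThread T => fsig T
  | TWhen s T => fsn s ++ fsig T
  | TWatch s T => fsn s ++ fsig T
  | TCall _ args => flat_map fsn args
  | TSeq T1 T2 => fsig T1 ++ fsig T2
  end.

Definition sigP (P : program) : list signal := flat_map fsig P.

Definition open_sn (k : nat) (s : signal) (x : sname) : sname :=
  match x with
  | BV n => if Nat.eqb n k then FV s else BV n
  | FV _ => x
  end.

Fixpoint open_rec (k : nat) (s : signal) (T : thread) : thread :=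
  match T with
  | TNil => TNil
  | TEmit x => TEmit (open_sn k s x)
  | TLocal T => TLocal (open_rec (S k) s T)
  | TThread T => TThread (open_rec k s T)
  | TWhen x T => TWhen (open_sn k s x) (open_rec k s T)
  | TWatch x T => TWatch (open_sn k s x) (open_rec k s T)
  | TCall A args => TCall A (map (open_sn k s) args)
  | TSeq T1 T2 => TSeq (open_rec k s T1) (open_rec k s T2)
  end.

Definition open (s : signal) (T : thread) : thread := open_rec 0 s T.

(* parallel substitution [ss/xs] of free names (no capture possible) *)
Fixpoint lookup_sub (xs : list signal) (ss : list sname) (x : signal) : sname :=
  match xs, ss with
  | y :: xs', t :: ss' => if Nat.eqb x y then t else lookup_sub xs' ss' x
  | _, _ => FV x
  end.

Definition subst_sn (xs : list signal) (ss : list sname) (x : sname) : sname :=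
  match x with FV y => lookup_sub xs ss y | BV n => BV n end.

Fixpoint subst (xs : list signal) (ss : list sname) (T : thread) : thread :=
  match T with
  | TNil => TNil
  | TEmit x => TEmit (subst_sn xs ss x)
  | TLocal T => TLocal (subst xs ss T)
  | TThread T => TThread (subst xs ss T)
  | TWhen x T => TWhen (subst_sn xs ss x) (subst xs ss T)
  | TWatch x T => TWatch (subst_sn xs ss x) (subst xs ss T)
  | TCall A args => TCall A (map (subst_sn xs ss) args)
  | TSeq T1 T2 => TSeq (subst xs ss T1) (subst xs ss T2)
  end.

(* Signal environments: partial functions signal -> bool
   (domain = {s | E s <> None}). *)
Definition env := signal -> option bool.

Definition upd (E : env) (s : signal) (b : bool) : env :=
  fun x => if Nat.eqb x s then Some b else E x.

Definition val (E : env) (x : sname) : option bool :=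
  match x with FV s => E s | BV _ => None end.

Definition emit_env (E : env) (x : sname) : env :=
  match x with FV s => upd E s true | BV _ => E end.

(* Atomic thread execution (T,E) =>_P (T',E') : [step D E T P T' E'] *)
Inductive step (D : defs) : env -> thread -> list thread -> thread -> env -> Prop :=
| RT1 : forall E, step D E TNil [] TNil E
| RT2 : forall E s, step D E (TEmit (FV s)) [] TNil (upd E s true)
| RT3 : forall E T s' P T' E',
    E s' = None ->
    step D (upd E s' false) (open s' T) P T' E' ->
    step D E (TLocal T) P T' E'
| RT4 : forall E T, step D E (TThread T) [T] TNil E
| RT5 : forall E A ss xs body P T' E',
    D A = (xs, body) ->
    length xs = length ss ->
    step D E (subst xs ss body) P T' E' ->
    step D E (TCall A ss) P T' E'
| RT6 : forall E s T, val E s = Some false -> step D E (TWhen s T) [] (TWhen s T) E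
| RT7 : forall E s T P E',
    val E s = Some true -> step D E T P TNil E' ->
    step D E (TWhen s T) P TNil E'
| RT8 : forall E s T P T' E',
    val E s = Some true -> step D E T P T' E' -> T' <> TNil ->
    step D E (TWhen s T) P (TWhen s T') E'
| RT9 : forall E s T P E',
    step D E T P TNil E' -> step D E (TWatch s T) P TNil E'
| RT10 : forall E s T P T' E',
    step D E T P T' E' -> T' <> TNil ->
    step D E (TWatch s T) P (TWatch s T') E'
| RT11 : forall E T1 T2 P1 E1 P2 T' E',
    step D E T1 P1 TNil E1 -> step D E1 T2 P2 T' E' ->
    step D E (TSeq T1 T2) (P1 ++ P2) T' E'
| RT12 : forall E T1 T2 P T' E',
    step D E T1 P T' E' -> T' <> TNil ->
    step D E (TSeq T1 T2) P (TSeq T' T2) E'.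

Definition stuck (D : defs) (E : env) (T : thread) : Prop := step D E T [] T E.

Definition is_true_sig (E : env) (x : sname) : bool :=
  match val E x with Some true => true | _ => false end.

(* end-of-instant abort function |_ T _|_E  (the cases not covered in the
   paper, which never apply to stuck threads, are left unchanged) *)
Fixpoint abort (E : env) (T : thread) : thread :=
  match T with
  | TNil => TNil
  | TSeq Ta Tb => TSeq (abort E Ta) Tb
  | TWhen s Ta => if is_true_sig E s then TWhen s (abort E Ta) else TWhen s Ta
  | TWatch s Ta => if is_true_sig E s then TNil else TWatch s (abort E Ta)
  | _ => T
  end.

Inductive instant (D : defs) : program -> env -> program -> env -> Prop :=
| RP1 : forall P E,
    (forall T, In T P -> stuck D E T) ->
    instant D P E (map (abort E) P) E
| RP2 : forall Pa T Pb E P' T' E' P'' E'',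
    ~ stuck D E T ->
    step D E T P' T' E' ->
    instant D (Pa ++ T' :: Pb ++ P') E' P'' E'' ->
    instant D (Pa ++ T :: Pb) E P'' E''.

Definition memb (s : signal) (l : list signal) : bool := existsb (Nat.eqb s) l.

(* E_{I,P} ; input sets I ⊆ Int are boolean predicates *)
Definition init_env (Int : list signal) (I : signal -> bool) (P : program) : env :=
  fun s => if I s then Some true
           else if memb s (Int ++ sigP P) then Some false else None.

Definition output (Int : list signal) (E : env) : signal -> bool :=
  fun s => memb s Int && match E s with Some true => true | _ => false end.

Definition trans (Int : list signal) (D : defs) (P : program)
    (I : signal -> bool) (O : signal -> bool) (P' : program) : Prop :=
  exists E', instant D P (init_env Int I P) P' E' /\ O = output Int E'.

Definition rename_sn (f : signal -> signal) (x : sname) : sname :=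
  match x with FV s => FV (f s) | BV n => BV n end.

Fixpoint rename (f : signal -> signal) (T : thread) : thread :=
  match T with
  | TNil => TNil
  | TEmit x => TEmit (rename_sn f x)
  | TLocal T => TLocal (rename f T)
  | TThread T => TThread (rename f T)
  | TWhen x T => TWhen (rename_sn f x) (rename f T)
  | TWatch x T => TWatch (rename_sn f x) (rename f T)
  | TCall A args => TCall A (map (rename_sn f) args)
  | TSeq T1 T2 => TSeq (rename f T1) (rename f T2)
  end.

(* P and P' are equal up to renaming: a bijection f : sig(P) -> sig(P')
   (injective on sig(P); onto sig(P') since the renamed P equals P'),
   which is the identity on Int (and whose inverse is too), and whose
   application to P yields P' as a multiset. *)
Definition eq_up_to_renaming (Int : list signal) (P P' : program) : Prop :=
  exists f : signal -> signal,
    (forall x y, In x (sigP P) -> In y (sigP P) -> f x = f y -> x = y) /\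
    (forall x, In x (sigP P) -> (In x Int \/ In (f x) Int) -> f x = x) /\
    Permutation (map (rename f) P) P'.

CoInductive deterministic (Int : list signal) (D : defs) (P : program) : Prop :=
| det_intro :
    (forall (I O1 O2 : signal -> bool) (Q1 Q2 : program),
        (forall s, I s = true -> In s Int) ->
        trans Int D P I O1 Q1 -> trans Int D P I O2 Q2 ->
        (forall s, O1 s = O2 s) /\ eq_up_to_renaming Int Q1 Q2 /\
        deterministic Int D Q1) ->
    deterministic Int D P.

Definition wf_defs (D : defs) : Prop :=
  forall A, NoDup (fst (D A)) /\ incl (fsig (snd (D A))) (fst (D A)).

(* Main.v *)
Require Import Defs.
From Stdlib Require Import List Arith Bool Permutation Lia FunctionalExtensionality Classical.
Import ListNotations.

Lemma rename_sn_open : forall f k s x,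
  rename_sn f (open_sn k s x) = open_sn k (f s) (rename_sn f x).
Proof. intros f k s [y|n]; simpl; auto. destruct (Nat.eqb n k); auto. Qed.

Lemma rename_open : forall f T k s,
  rename f (open_rec k s T) = open_rec k (f s) (rename f T).
Proof.
  intros f T; induction T as [| s | T IHT | T IHT | s T IHT | s T IHT | A args | T1 IHT1 T2 IHT2]; intros k s0; simpl; f_equal; auto using rename_sn_open.
  rewrite !map_map. apply map_ext. intros; apply rename_sn_open.
Qed.

Lemma rename_sn_ext : forall f g x, (forall y, In y (fsn x) -> f y = g y) ->
  rename_sn f x = rename_sn g x.
Proof. intros f g [y|n] H; simpl in *; f_equal; auto. Qed.

Lemma rename_ext : forall f g T, (forall x, In x (fsig T) -> f x = g x) ->
  rename f T = rename g T.
Proof.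
  intros f g T; induction T as [| s | T IHT | T IHT | s T IHT | s T IHT | A args | T1 IHT1 T2 IHT2]; intros H; simpl in *; f_equal; try reflexivity;
  try (apply rename_sn_ext; intros; apply H; auto using in_or_app; fail);
  try (apply IHT; intros; apply H; auto using in_or_app; fail);
  try (apply IHT1; intros; apply H; auto using in_or_app; fail);
  try (apply IHT2; intros; apply H; auto using in_or_app; fail).
  apply map_ext_in. intros a Ha. apply rename_sn_ext. intros y Hy. apply H.
  apply in_flat_map. eauto.
Qed.

Lemma rename_id : forall T, rename (fun x => x) T = T.
Proof.
  induction T as [| s | T IHT | T IHT | s T IHT | s T IHT | A args | T1 IHT1 T2 IHT2]; simpl; f_equal; auto; try (destruct s; reflexivity).
  induction args; simpl; f_equal; auto. destruct a; reflexivity.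
Qed.

Lemma rename_fix : forall f T, (forall x, In x (fsig T) -> f x = x) -> rename f T = T.
Proof. intros. rewrite (rename_ext f (fun x => x)); auto. apply rename_id. Qed.

Lemma rename_comp : forall f g T, rename f (rename g T) = rename (fun x => f (g x)) T.
Proof.
  induction T as [| s | T IHT | T IHT | s T IHT | s T IHT | A args | T1 IHT1 T2 IHT2]; simpl; f_equal; auto; try (destruct s; reflexivity).
  rewrite map_map. apply map_ext. intros [y|n]; reflexivity.
Qed.

Lemma fsig_rename : forall f T, fsig (rename f T) = map f (fsig T).
Proof.
  induction T as [| s | T IHT | T IHT | s T IHT | s T IHT | A args | T1 IHT1 T2 IHT2]; simpl; auto; try (destruct s; simpl; auto; fail);
  try (destruct s; simpl; rewrite ?IHT, ?map_app; auto; fail).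
  - induction args; simpl; auto. rewrite map_app, IHargs. destruct a; reflexivity.
  - rewrite IHT1, IHT2, map_app; auto.
Qed.

Lemma fsig_open : forall T k s x, In x (fsig (open_rec k s T)) -> x = s \/ In x (fsig T).
Proof.
  induction T as [| s | T IHT | T IHT | s T IHT | s T IHT | A args | T1 IHT1 T2 IHT2]; intros k s0 x H; simpl in *; auto;
  try (destruct s as [y|n]; simpl in *; [auto| destruct (Nat.eqb n k); simpl in *; intuition]; fail).
  - eapply IHT; eauto.
  - eapply IHT; eauto.
  - apply in_app_or in H as [H|H].
    + destruct s as [y|n]; simpl in *; [intuition| destruct (Nat.eqb n k); simpl in *; intuition].
    + destruct (IHT _ _ _ H); auto using in_or_app.
  - apply in_app_or in H as [H|H].
    + destruct s as [y|n]; simpl in *; [intuition| destruct (Nat.eqb n k); simpl in *; intuition].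
    + destruct (IHT _ _ _ H); auto using in_or_app.
  - induction args; simpl in *; auto.
    apply in_app_or in H as [H|H].
    + destruct a as [y|n]; simpl in *; [intuition| destruct (Nat.eqb n k); simpl in *; intuition].
    + destruct (IHargs H); auto using in_or_app.
  - apply in_app_or in H as [H|H].
    + destruct (IHT1 _ _ _ H); auto using in_or_app.
    + destruct (IHT2 _ _ _ H); auto using in_or_app.
Qed.

Lemma lookup_rename : forall f xs ss y, In y xs -> length xs = length ss ->
  rename_sn f (lookup_sub xs ss y) = lookup_sub xs (map (rename_sn f) ss) y.
Proof.
  induction xs; intros ss y Hi Hl; simpl in *; [contradiction|].
  destruct ss; simpl in *; [discriminate|].
  destruct (Nat.eqb y a) eqn:E; auto.
  apply IHxs; auto. destruct Hi; auto. subst; rewrite Nat.eqb_refl in E; discriminate.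
Qed.

Lemma lookup_in : forall xs ss y x, In y xs -> length xs = length ss ->
  In x (fsn (lookup_sub xs ss y)) -> In x (flat_map fsn ss).
Proof.
  induction xs; intros ss y x Hi Hl H; simpl in *; [contradiction|].
  destruct ss; simpl in *; [discriminate|].
  destruct (Nat.eqb y a) eqn:E; auto using in_or_app.
  apply in_or_app; right. eapply IHxs; eauto.
  destruct Hi; auto. subst; rewrite Nat.eqb_refl in E; discriminate.
Qed.

Lemma rename_subst : forall f body xs ss, incl (fsig body) xs -> length xs = length ss ->
  rename f (subst xs ss body) = subst xs (map (rename_sn f) ss) body.
Proof.
  intros f body; induction body as [| s | T IHbody | T IHbody | s T IHbody | s T IHbody | A args | T1 IHbody1 T2 IHbody2]; intros xs ss Hi Hl; simpl in *; f_equal;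
  try (apply IHbody; auto; intros ??; apply Hi; auto using in_or_app; fail);
  try (apply IHbody1; auto; intros ??; apply Hi; auto using in_or_app; fail);
  try (apply IHbody2; auto; intros ??; apply Hi; auto using in_or_app; fail);
  try (destruct s as [y|n]; simpl in *; auto; apply lookup_rename; auto; apply Hi; simpl; auto using in_or_app; fail).
  - reflexivity.
  - rewrite map_map. apply map_ext_in. intros a Ha.
    destruct a as [y|n]; simpl; auto. apply lookup_rename; auto. apply Hi; simpl.
    apply in_flat_map. exists (FV y); simpl; auto.
Qed.

Lemma fsig_subst : forall body xs ss x, incl (fsig body) xs -> length xs = length ss ->
  In x (fsig (subst xs ss body)) -> In x (flat_map fsn ss).
Proof.
  intros body; induction body as [| s | T IHbody | T IHbody | s T IHbody | s T IHbody | A args | T1 IHbody1 T2 IHbody2]; intros xs ss x Hi Hl H; simpl in *;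
  try contradiction;
  try (eapply IHbody; eauto; fail).
  - destruct s as [y|n]; simpl in *; [|contradiction].
    apply (lookup_in xs ss y x); auto; apply Hi; simpl; auto using in_or_app.
  - apply in_app_or in H as [H|H].
    + destruct s as [y|n]; simpl in *; [|contradiction].
      apply (lookup_in xs ss y x); auto; apply Hi; simpl; auto using in_or_app.
    + eapply IHbody; eauto. intros ??; apply Hi; auto using in_or_app.
  - apply in_app_or in H as [H|H].
    + destruct s as [y|n]; simpl in *; [|contradiction].
      apply (lookup_in xs ss y x); auto; apply Hi; simpl; auto using in_or_app.
    + eapply IHbody; eauto. intros ??; apply Hi; auto using in_or_app.
  - induction args; simpl in *; [contradiction|].
    apply in_app_or in H as [H|H].
    + destruct a as [y|n]; simpl in *; [|contradiction].
      apply (lookup_in xs ss y x); auto; apply Hi; simpl; auto using in_or_app.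
    + apply IHargs; auto. intros ??; apply Hi; auto using in_or_app.
  - apply in_app_or in H as [H|H].
    + eapply IHbody1; eauto. intros ??; apply Hi; auto using in_or_app.
    + eapply IHbody2; eauto. intros ??; apply Hi; auto using in_or_app.
Qed.

Lemma rename_abort : forall f E1 E2 T, (forall x, E2 (f x) = E1 x) ->
  rename f (abort E1 T) = abort E2 (rename f T).
Proof.
  intros f E1 E2 T H; induction T as [| s | T IHT | T IHT | s T IHT | s T IHT | A args | T1 IHT1 T2 IHT2]; simpl; auto.
  - assert (is_true_sig E2 (rename_sn f s) = is_true_sig E1 s) as ->.
    { destruct s; simpl; unfold is_true_sig; simpl; rewrite ?H; auto. }
    destruct (is_true_sig E1 s); simpl; f_equal; auto.
  - assert (is_true_sig E2 (rename_sn f s) = is_true_sig E1 s) as ->.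
    { destruct s; simpl; unfold is_true_sig; simpl; rewrite ?H; auto. }
    destruct (is_true_sig E1 s); simpl; f_equal; auto.
  - f_equal; auto.
Qed.

Inductive act : Type := ANone | AEmit (s : signal) | ALocal (s : signal).

Definition apply_act (E : env) (a : act) : env :=
  match a with ANone => E | AEmit s => upd E s true | ALocal s => upd E s false end.

Definition act_ok (E : env) (a : act) : Prop :=
  match a with ALocal s => E s = None | _ => True end.

Definition rename_act (f : signal -> signal) (a : act) : act :=
  match a with ANone => ANone | AEmit s => AEmit (f s) | ALocal s => ALocal (f s) end.

Inductive mstep (D : defs) : env -> thread -> act -> list thread -> thread -> Prop :=
| M_emit : forall E s, mstep D E (TEmit (FV s)) (AEmit s) [] TNil
| M_local : forall E T s, E s = None -> mstep D E (TLocal T) (ALocal s) [] (open s T)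
| M_thread : forall E T, mstep D E (TThread T) ANone [T] TNil
| M_call : forall E A ss xs body, D A = (xs, body) -> length xs = length ss ->
    mstep D E (TCall A ss) ANone [] (subst xs ss body)
| M_when : forall E s T a Q T', val E s = Some true -> mstep D E T a Q T' ->
    mstep D E (TWhen s T) a Q (TWhen s T')
| M_whenNil : forall E s, val E s = Some true -> mstep D E (TWhen s TNil) ANone [] TNil
| M_watch : forall E s T a Q T', mstep D E T a Q T' -> mstep D E (TWatch s T) a Q (TWatch s T')
| M_watchNil : forall E s, mstep D E (TWatch s TNil) ANone [] TNil
| M_seq : forall E T1 T2 a Q T', mstep D E T1 a Q T' -> mstep D E (TSeq T1 T2) a Q (TSeq T' T2)
| M_seqNil : forall E T2, mstep D E (TSeq TNil T2) ANone [] T2.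

Lemma mstep_act_ok : forall D E T a Q T', mstep D E T a Q T' -> act_ok E a.
Proof. induction 1; simpl; auto. Qed.

Lemma mstep_emit_in : forall D E T a Q T', mstep D E T a Q T' ->
  forall s, a = AEmit s -> In s (fsig T).
Proof.
  induction 1; intros s0 Ha; try discriminate; simpl; auto using in_or_app.
  - inversion Ha; auto.
Qed.

Lemma mstep_sig : forall D, wf_defs D -> forall E T a Q T', mstep D E T a Q T' ->
  (forall x, In x (fsig T') -> In x (fsig T) \/ a = ALocal x) /\
  (forall T0 x, In T0 Q -> In x (fsig T0) -> In x (fsig T) \/ a = ALocal x).
Proof.
  intros D HD. induction 1; simpl; split; intros; try contradiction; auto.
  - destruct (fsig_open _ _ _ _ H0); subst; auto.
  - destruct H; [subst; auto | contradiction].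
  - left. destruct (HD A) as [_ Hi]. rewrite H in Hi. simpl in Hi.
    eapply fsig_subst; eauto.
  - apply in_app_or in H1 as [H1|H1]; auto using in_or_app.
    destruct (proj1 IHmstep _ H1); auto using in_or_app.
  - destruct (proj2 IHmstep _ _ H1 H2); auto using in_or_app.
  - apply in_app_or in H0 as [H1|H1]; auto using in_or_app.
    destruct (proj1 IHmstep _ H1); auto using in_or_app.
  - destruct (proj2 IHmstep _ _ H0 H1); auto using in_or_app.
  - apply in_app_or in H0 as [H1|H1]; auto using in_or_app.
    destruct (proj1 IHmstep _ H1); auto using in_or_app.
  - destruct (proj2 IHmstep _ _ H0 H1); auto using in_or_app.
Qed.

Lemma mstep_lift : forall D E T a Q T', mstep D E T a Q T' ->
  forall E1, (forall s, E s = Some true -> E1 s = Some true) -> act_ok E1 a ->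
  mstep D E1 T a Q T'.
Proof.
  induction 1; intros E1 Hm Hok; simpl in *; try (constructor; auto; fail).
  all: try (econstructor; eauto; fail).
  all: try (constructor; auto; destruct s; simpl in *; auto; discriminate).
Qed.

Definition bij (f g : signal -> signal) := (forall x, g (f x) = x) /\ (forall x, f (g x) = x).

Lemma upd_rename : forall f g E s b, bij f g ->
  (fun x => upd E s b (g x)) = upd (fun x => E (g x)) (f s) b.
Proof.
  intros f g E s b [H1 H2]. apply functional_extensionality. intros x. unfold upd.
  destruct (Nat.eqb x (f s)) eqn:E1; destruct (Nat.eqb (g x) s) eqn:E2; auto.
  - apply Nat.eqb_eq in E1; subst. rewrite H1, Nat.eqb_refl in E2. discriminate.
  - apply Nat.eqb_eq in E2; subst. rewrite H2, Nat.eqb_refl in E1. discriminate.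
Qed.

Lemma apply_act_rename : forall f g E a, bij f g ->
  (fun x => apply_act E a (g x)) = apply_act (fun x => E (g x)) (rename_act f a).
Proof.
  intros f g E [|s|s] H; simpl; auto using upd_rename.
Qed.

Lemma mstep_rename : forall D, wf_defs D -> forall f g, bij f g ->
  forall E T a Q T', mstep D E T a Q T' ->
  mstep D (fun x => E (g x)) (rename f T) (rename_act f a) (map (rename f) Q) (rename f T').
Proof.
  intros D HD f g Hb. induction 1; simpl.
  - constructor.
  - unfold open. rewrite rename_open. constructor. destruct Hb as [H1 _]. rewrite H1; auto.
  - constructor.
  - destruct (HD A) as [_ Hi]. rewrite H in Hi. simpl in Hi.
    rewrite rename_subst by auto. econstructor; eauto. rewrite length_map; auto.
  - constructor; auto. destruct s; simpl in *; auto. destruct Hb as [H1 _]; rewrite H1; auto.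
  - constructor. destruct s; simpl in *; auto. destruct Hb as [H1 _]; rewrite H1; auto.
  - constructor; auto.
  - constructor.
  - constructor; auto.
  - constructor.
Qed.

Definition swap (a b : signal) (x : signal) : signal :=
  if Nat.eqb x a then b else if Nat.eqb x b then a else x.

Lemma swap_invol : forall a b x, swap a b (swap a b x) = x.
Proof.
  intros a b x; unfold swap.
  destruct (Nat.eqb x a) eqn:E1.
  - apply Nat.eqb_eq in E1; subst. destruct (Nat.eqb b a) eqn:E2.
    + apply Nat.eqb_eq in E2; auto.
    + rewrite Nat.eqb_refl; auto.
  - destruct (Nat.eqb x b) eqn:E2.
    + apply Nat.eqb_eq in E2; subst. rewrite Nat.eqb_refl; auto.
    + rewrite E1, E2; auto.
Qed.

Lemma swap_bij : forall a b, bij (swap a b) (swap a b).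
Proof. intros; split; apply swap_invol. Qed.

Lemma swap_fix : forall a b x, x <> a -> x <> b -> swap a b x = x.
Proof.
  intros a b x H1 H2; unfold swap.
  destruct (Nat.eqb x a) eqn:E1; [apply Nat.eqb_eq in E1; contradiction|].
  destruct (Nat.eqb x b) eqn:E2; [apply Nat.eqb_eq in E2; contradiction|]; auto.
Qed.

Lemma swap_l : forall a b, swap a b a = b.
Proof. intros; unfold swap; rewrite Nat.eqb_refl; auto. Qed.

Lemma rename_swap_fix : forall (E : env) a b T, E a = None -> E b = None ->
  (forall x, In x (fsig T) -> E x <> None) -> rename (swap a b) T = T.
Proof.
  intros E a b T Ha Hb H. apply rename_fix. intros x Hx. apply swap_fix; intro; subst; eapply H; eauto.
Qed.

Definition mrel (E : env) (a1 a2 : act) (Q1 Q2 : list thread) (T1 T2 : thread) : Prop :=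
  (a1 = a2 /\ Q1 = Q2 /\ T1 = T2) \/
  (exists s1 s2, a1 = ALocal s1 /\ a2 = ALocal s2 /\ E s1 = None /\ E s2 = None /\
     Q2 = map (rename (swap s1 s2)) Q1 /\ T2 = rename (swap s1 s2) T1).

Lemma mrel_ctx : forall E (C : thread -> thread) a1 a2 Q1 Q2 T1 T2,
  mrel E a1 a2 Q1 Q2 T1 T2 ->
  (forall s1 s2, E s1 = None -> E s2 = None -> rename (swap s1 s2) (C T1) = C (rename (swap s1 s2) T1)) ->
  mrel E a1 a2 Q1 Q2 (C T1) (C T2).
Proof.
  intros E C a1 a2 Q1 Q2 T1 T2 [[? [? ?]]|[s1 [s2 [? [? [? [? [? ?]]]]]]]] HC; subst.
  - left; auto.
  - right; exists s1, s2; repeat split; auto. rewrite HC; auto.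
Qed.

Lemma mstep_nil : forall D E a Q T', ~ mstep D E TNil a Q T'.
Proof. intros D E a Q T' H; inversion H. Qed.

Lemma mstep_det : forall D E T a1 Q1 T1, mstep D E T a1 Q1 T1 ->
  forall a2 Q2 T2, mstep D E T a2 Q2 T2 ->
  (forall x, In x (fsig T) -> E x <> None) ->
  mrel E a1 a2 Q1 Q2 T1 T2.
Proof.
  induction 1; intros a0 Q0 T0 H2 Hd; inversion H2; subst; simpl in *;
  try (left; auto; fail);
  try (exfalso; eapply mstep_nil; eauto; fail).
  - right. exists s, s0. repeat split; auto.
    unfold open. rewrite rename_open, swap_l. f_equal. symmetry; eapply rename_swap_fix; eauto.
  - match goal with H : D A = _, H' : D A = _ |- _ => rewrite H in H'; inversion H'; subst end. left; auto.
  - apply (mrel_ctx E (TWhen s)); [apply IHmstep; auto; intros; apply Hd; auto using in_or_app|].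
    intros s1 s2 Hs1 Hs2. simpl. f_equal. destruct s as [y|n]; simpl in *; auto.
    f_equal. apply swap_fix; intro; subst; congruence.
  - apply (mrel_ctx E (TWatch s)); [apply IHmstep; auto; intros; apply Hd; auto using in_or_app|].
    intros s1 s2 Hs1 Hs2. simpl. f_equal. destruct s as [y|n]; simpl in *; auto.
    f_equal. apply swap_fix; intro; subst; eapply Hd; eauto.
  - apply (mrel_ctx E (fun X => TSeq X T2)); [apply IHmstep; auto; intros; apply Hd; auto using in_or_app|].
    intros s1 s2 Hs1 Hs2. simpl. f_equal.
    eapply rename_swap_fix; eauto. intros; apply Hd; auto using in_or_app.
Qed.

Inductive mstar (D : defs) : env -> thread -> list thread -> thread -> env -> Prop :=
| ms_refl : forall E T, mstar D E T [] T E
| ms_step : forall E T a Q1 T1 Q2 T2 E2, mstep D E T a Q1 T1 ->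
    mstar D (apply_act E a) T1 Q2 T2 E2 -> mstar D E T (Q1 ++ Q2) T2 E2.

Lemma mstar_trans : forall D E T Q1 T1 E1, mstar D E T Q1 T1 E1 ->
  forall Q2 T2 E2, mstar D E1 T1 Q2 T2 E2 -> mstar D E T (Q1 ++ Q2) T2 E2.
Proof.
  induction 1; intros; simpl; auto. rewrite <- app_assoc. econstructor; eauto.
Qed.

Lemma apply_act_true : forall E a s, act_ok E a -> E s = Some true -> apply_act E a s = Some true.
Proof.
  intros E [|x|x] s Hok H; simpl in *; unfold upd; auto;
  destruct (Nat.eqb s x) eqn:Ex; auto. apply Nat.eqb_eq in Ex; subst; congruence.
Qed.

Lemma mstar_true : forall D E T Q T' E', mstar D E T Q T' E' ->
  forall s, E s = Some true -> E' s = Some true.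
Proof.
  induction 1; intros; auto. apply IHmstar. eapply apply_act_true; eauto. eapply mstep_act_ok; eauto.
Qed.

Lemma val_true_mono : forall (E E' : env), (forall s, E s = Some true -> E' s = Some true) ->
  forall x, val E x = Some true -> val E' x = Some true.
Proof. intros E E' H [y|n]; simpl; auto. Qed.

Lemma mstar_seq : forall D E T Q T' E', mstar D E T Q T' E' ->
  forall X, mstar D E (TSeq T X) Q (TSeq T' X) E'.
Proof. induction 1; intros; [constructor|]. econstructor; [constructor; eauto| auto]. Qed.

Lemma mstar_watch : forall D E T Q T' E', mstar D E T Q T' E' ->
  forall s, mstar D E (TWatch s T) Q (TWatch s T') E'.
Proof. induction 1; intros; [constructor|]. econstructor; [constructor; eauto| auto]. Qed.

Lemma mstar_when : forall D E T Q T' E', mstar D E T Q T' E' ->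
  forall s, val E s = Some true -> mstar D E (TWhen s T) Q (TWhen s T') E'.
Proof.
  induction 1; intros; [constructor|]. econstructor; [constructor; eauto| ].
  apply IHmstar. eapply val_true_mono; [|eauto]. intros; eapply apply_act_true; eauto.
  eapply mstep_act_ok; eauto.
Qed.

Lemma mstar_one : forall D E T a Q T', mstep D E T a Q T' -> mstar D E T Q T' (apply_act E a).
Proof. intros. rewrite <- (app_nil_r Q). econstructor; eauto. constructor. Qed.

Lemma step_mstar : forall D E T P T' E', step D E T P T' E' -> mstar D E T P T' E'.
Proof.
  induction 1.
  - constructor.
  - apply (mstar_one D E (TEmit (FV s)) (AEmit s)). constructor.
  - rewrite <- (app_nil_l P). econstructor; [apply M_local; eauto|]. exact IHstep.
  - apply (mstar_one D E (TThread T) ANone). constructor.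
  - rewrite <- (app_nil_l P). econstructor; [eapply M_call; eauto|]. exact IHstep.
  - constructor.
  - rewrite <- (app_nil_r P). eapply mstar_trans; [apply mstar_when; eauto|].
    apply (mstar_one D E' (TWhen s TNil) ANone). constructor.
    eapply val_true_mono; [|eauto]. eapply mstar_true; eauto.
  - apply mstar_when; auto.
  - rewrite <- (app_nil_r P). eapply mstar_trans; [apply mstar_watch; eauto|].
    apply (mstar_one D E' (TWatch s TNil) ANone). constructor.
  - apply mstar_watch; auto.
  - eapply mstar_trans; [apply mstar_seq; eauto|].
    rewrite <- (app_nil_l P2). econstructor; [apply M_seqNil|]. exact IHstep2.
  - apply mstar_seq; auto.
Qed.

Inductive blocked (E : env) : thread -> Prop :=
| B_nil : blocked E TNil
| B_whenF : forall s T, val E s = Some false -> blocked E (TWhen s T)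
| B_whenT : forall s T, val E s = Some true -> blocked E T -> T <> TNil -> blocked E (TWhen s T)
| B_watch : forall s T, blocked E T -> T <> TNil -> blocked E (TWatch s T)
| B_seq : forall T1 T2, blocked E T1 -> T1 <> TNil -> blocked E (TSeq T1 T2).

Lemma step_blocked : forall D E T P T' E', step D E T P T' E' -> blocked E' T'.
Proof.
  induction 1; try (constructor; auto; fail); auto.
  apply B_whenT; auto.
  eapply val_true_mono; [|eauto]. eapply mstar_true. apply step_mstar; eauto.
Qed.

Lemma blocked_nomstep : forall D E T, blocked E T -> forall a Q T', ~ mstep D E T a Q T'.
Proof.
  induction 1; intros a Q T' Hm; inversion Hm; subst; try congruence; eauto.
  - eapply IHblocked; eauto.
  - eapply IHblocked; eauto.
  - eapply IHblocked; eauto.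
Qed.

Lemma stuck_nomstep : forall D E T, stuck D E T -> forall a Q T', ~ mstep D E T a Q T'.
Proof. intros. apply blocked_nomstep. eapply step_blocked; eauto. Qed.

Definition cfg := (program * env)%type.

Inductive cstep (D : defs) : cfg -> cfg -> Prop :=
| cs_intro : forall P E T Rest a Q T', Permutation P (T :: Rest) -> mstep D E T a Q T' ->
    cstep D (P, E) (T' :: Rest ++ Q, apply_act E a).

Inductive csteps (D : defs) : nat -> cfg -> cfg -> Prop :=
| css0 : forall X, csteps D 0 X X
| cssS : forall n X Y Z, cstep D X Y -> csteps D n Y Z -> csteps D (S n) X Z.

Lemma csteps_trans : forall D n X Y, csteps D n X Y -> forall m Z, csteps D m Y Z -> csteps D (n + m) X Z.
Proof. induction 1; intros; simpl; auto. econstructor; eauto. Qed.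

Definition normal (D : defs) (X : cfg) := forall Y, ~ cstep D X Y.

Definition equiv (B : signal -> Prop) (X Y : cfg) : Prop :=
  exists f g, bij f g /\ (forall x, B x -> f x = x) /\ (forall x, snd Y (f x) = snd X x) /\
    Permutation (map (rename f) (fst X)) (fst Y).

Lemma map_rename_id : forall P, map (rename (fun x => x)) P = P.
Proof. induction P; simpl; f_equal; auto using rename_id. Qed.

Lemma map_rename_comp : forall f g P, map (rename f) (map (rename g) P) = map (rename (fun x => f (g x))) P.
Proof. intros; rewrite map_map; apply map_ext; intros; apply rename_comp. Qed.

Lemma map_rename_ext : forall f g P, (forall x, f x = g x) -> map (rename f) P = map (rename g) P.
Proof. intros; apply map_ext; intros; apply rename_ext; auto. Qed.

Lemma equiv_refl : forall B X, equiv B X X.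
Proof.
  intros B [P E]. exists (fun x => x), (fun x => x). repeat split; auto. simpl. rewrite map_rename_id; auto.
Qed.

Lemma equiv_perm : forall B P P' E, Permutation P P' -> equiv B (P, E) (P', E).
Proof.
  intros. exists (fun x => x), (fun x => x). repeat split; auto. simpl. rewrite map_rename_id; auto.
Qed.

Lemma equiv_sym : forall B X Y, equiv B X Y -> equiv B Y X.
Proof.
  intros B [P E] [P2 E2] [f [g [[H1 H2] [Hb [He Hp]]]]]; simpl in *.
  exists g, f. repeat split; auto.
  - intros x Bx. rewrite <- (Hb x Bx) at 1. auto.
  - intros x. simpl. rewrite <- He. rewrite H2; auto.
  - simpl. apply Permutation_map with (f := rename g) in Hp.
    rewrite map_rename_comp in Hp. rewrite (map_rename_ext _ (fun x => x)) in Hp by auto.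
    rewrite map_rename_id in Hp. symmetry; auto.
Qed.

Lemma equiv_trans : forall B X Y Z, equiv B X Y -> equiv B Y Z -> equiv B X Z.
Proof.
  intros B [P E] [P2 E2] [P3 E3] [f [g [[H1 H2] [Hb [He Hp]]]]] [f' [g' [[H1' H2'] [Hb' [He' Hp']]]]]; simpl in *.
  exists (fun x => f' (f x)), (fun x => g (g' x)). repeat split; simpl.
  - intros x; rewrite H1', H1; auto.
  - intros x; rewrite H2, H2'; auto.
  - intros x Bx; rewrite Hb, Hb'; auto.
  - intros x; rewrite He', He; auto.
  - rewrite <- map_rename_comp. eapply perm_trans; [apply Permutation_map; eauto| auto].
Qed.

Lemma env_of_equiv : forall f g (E E2 : env), bij f g -> (forall x, E2 (f x) = E x) ->
  E2 = (fun x => E (g x)).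
Proof.
  intros f g E E2 [H1 H2] He. apply functional_extensionality; intros x.
  rewrite <- He, H2; auto.
Qed.

Lemma cstep_equiv : forall D, wf_defs D -> forall B X Y X', equiv B X Y -> cstep D X X' ->
  exists Y', cstep D Y Y' /\ equiv B X' Y'.
Proof.
  intros D HD B X [P2 E2] X' [f [g [Hbij [Hb [He Hp]]]]] Hs.
  destruct Hs as [P E T Rest a Q T' Hperm Hm]; simpl in *.
  pose proof (env_of_equiv _ _ _ _ Hbij He) as HE2.
  pose proof (mstep_rename D HD f g Hbij _ _ _ _ _ Hm) as Hm2.
  exists (rename f T' :: map (rename f) Rest ++ map (rename f) Q, apply_act E2 (rename_act f a)).
  split.
  - subst E2. apply cs_intro with (T := rename f T); auto.
    eapply perm_trans; [symmetry; eauto|]. apply Permutation_map with (f := rename f) in Hperm. exact Hperm.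
  - exists f, g. split; [auto|]. split; [auto|]. split; simpl.
    + intros x. subst E2. pose proof (f_equal (fun h => h (f x)) (apply_act_rename f g E a Hbij)) as Hx.
      simpl in Hx. rewrite <- Hx. destruct Hbij as [H1 _]. rewrite H1; auto.
    + rewrite map_app. apply Permutation_refl.
Qed.

Lemma csteps_equiv : forall D, wf_defs D -> forall B n X Z Y, csteps D n X Z -> equiv B X Y ->
  exists Z', csteps D n Y Z' /\ equiv B Z Z'.
Proof.
  intros D HD B n X Z Y H; revert Y; induction H; intros Y0 He.
  - exists Y0; split; [constructor| auto].
  - destruct (cstep_equiv D HD B _ _ _ He H) as [Y' [H1 H2]].
    destruct (IHcsteps _ H2) as [Z' [H3 H4]]. exists Z'; split; auto. econstructor; eauto.
Qed.

Lemma normal_equiv : forall D, wf_defs D -> forall B X Y, equiv B X Y -> normal D X -> normal D Y.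
Proof.
  intros D HD B X Y He Hn Y' Hs. destruct (cstep_equiv D HD B _ _ _ (equiv_sym _ _ _ He) Hs) as [X' [H1 _]].
  eapply Hn; eauto.
Qed.

Definition wfc (B : signal -> Prop) (X : cfg) : Prop :=
  (forall T x, In T (fst X) -> In x (fsig T) -> snd X x <> None) /\
  (exists L, forall x, snd X x <> None -> In x L) /\
  (forall x, B x -> snd X x <> None).

Lemma upd_dom : forall E s b x, E x <> None -> upd E s b x <> None.
Proof. intros; unfold upd; destruct (Nat.eqb x s); congruence. Qed.

Lemma apply_act_dom : forall E a x, E x <> None -> apply_act E a x <> None.
Proof. intros E [|s|s] x H; simpl; auto using upd_dom. Qed.

Lemma upd_same : forall E s b, upd E s b s = Some b.
Proof. intros; unfold upd; rewrite Nat.eqb_refl; auto. Qed.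

Lemma upd_other : forall E s b x, x <> s -> upd E s b x = E x.
Proof. intros; unfold upd. destruct (Nat.eqb x s) eqn:H1; auto. apply Nat.eqb_eq in H1; contradiction. Qed.

Definition act_name (a : act) : list signal :=
  match a with ANone => [] | AEmit s => [s] | ALocal s => [s] end.

Lemma apply_act_dom_inv : forall E a x, apply_act E a x <> None -> E x <> None \/ In x (act_name a).
Proof.
  intros E [|s|s] x H; simpl in *; auto;
  destruct (Nat.eq_dec x s); subst; auto; rewrite upd_other in H; auto.
Qed.

Lemma wfc_cstep : forall D, wf_defs D -> forall B X Y, wfc B X -> cstep D X Y -> wfc B Y.
Proof.
  intros D HD B X Y [H1 [[L HL] H3]] Hs. destruct Hs as [P E T Rest a Q T' Hp Hm]; simpl in *.
  pose proof (mstep_sig D HD _ _ _ _ _ Hm) as [S1 S2].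
  assert (HT : In T P) by (apply Permutation_in with (T :: Rest); [symmetry; auto| simpl; auto]).
  split; [|split].
  - intros T0 x Hin Hx. destruct Hin as [Heq|Hin].
    + subst T0. destruct (S1 _ Hx) as [Hx'|Hx']; [|subst a]; [apply apply_act_dom; apply (H1 T x); auto|simpl; rewrite upd_same; discriminate].
    + apply in_app_or in Hin as [Hin|Hin].
      * apply apply_act_dom. apply (H1 T0 x); auto. apply Permutation_in with (T :: Rest); [symmetry; auto| simpl; auto].
      * destruct (S2 _ _ Hin Hx) as [Hx'|Hx']; [|subst a]; [apply apply_act_dom; apply (H1 T x); auto|simpl; rewrite upd_same; discriminate].
  - exists (act_name a ++ L). intros x Hx. apply apply_act_dom_inv in Hx as [Hx|Hx]; auto using in_or_app.
  - intros; apply apply_act_dom; auto.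
Qed.

Lemma csteps_wfc : forall D, wf_defs D -> forall B n X Y, csteps D n X Y -> wfc B X -> wfc B Y.
Proof. intros D HD B n X Y H; induction H; intros; auto. apply IHcsteps. eapply wfc_cstep; eauto. Qed.

Fixpoint sumL (l : list nat) : nat := match l with [] => 0 | x :: l => x + sumL l end.

Lemma sumL_ge : forall l x, In x l -> x <= sumL l.
Proof. induction l; simpl; intros x H; [contradiction|]. destruct H; subst; [lia|]. specialize (IHl _ H); lia. Qed.

Lemma fresh_exists : forall l : list nat, exists n, ~ In n l.
Proof. intros l. exists (S (sumL l)). intro H. apply sumL_ge in H. lia. Qed.

Lemma rename_swap_invol : forall a b T, rename (swap a b) (rename (swap a b) T) = T.
Proof.
  intros. rewrite rename_comp. rewrite (rename_ext _ (fun x => x)); [apply rename_id|].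
  intros; apply swap_invol.
Qed.

Lemma map_rename_swap_invol : forall a b P, map (rename (swap a b)) (map (rename (swap a b)) P) = P.
Proof. induction P; simpl; f_equal; auto using rename_swap_invol. Qed.

Lemma map_rename_fix : forall f R, (forall T x, In T R -> In x (fsig T) -> f x = x) ->
  map (rename f) R = R.
Proof.
  induction R; intros H; simpl; auto. f_equal.
  - apply rename_fix. intros; eapply H; simpl; eauto.
  - apply IHR. intros; eapply H; simpl; eauto.
Qed.

Lemma perm_helper : forall (x y : thread) R A B0,
  Permutation (x :: y :: R ++ A ++ B0) (y :: x :: R ++ B0 ++ A).
Proof.
  intros. eapply perm_trans; [apply perm_swap|]. do 2 constructor.
  apply Permutation_app_head. apply Permutation_app_comm.
Qed.

Lemma env_swap_inv : forall (E : env) a b, E a = E b -> (fun x => E (swap a b x)) = E.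
Proof.
  intros E a b H. apply functional_extensionality; intros x. unfold swap.
  destruct (Nat.eqb x a) eqn:H1; [apply Nat.eqb_eq in H1; subst; auto|].
  destruct (Nat.eqb x b) eqn:H2; [apply Nat.eqb_eq in H2; subst; auto|]. auto.
Qed.

Lemma act_commute : forall E a1 a2, act_ok E a1 -> act_ok E a2 ->
  (forall s, a1 = AEmit s -> E s <> None) -> (forall s, a2 = AEmit s -> E s <> None) ->
  (forall s, a1 = ALocal s -> a2 <> ALocal s) ->
  apply_act (apply_act E a1) a2 = apply_act (apply_act E a2) a1 /\ act_ok (apply_act E a1) a2.
Proof.
  intros E [|s1|s1] [|s2|s2] H1 H2 He1 He2 Hl; simpl in *; split; auto;
  try (apply functional_extensionality; intros x; unfold upd;
       destruct (Nat.eqb x s1) eqn:X1; destruct (Nat.eqb x s2) eqn:X2; auto;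
       apply Nat.eqb_eq in X1; apply Nat.eqb_eq in X2; subst;
       try (exfalso; eapply He1; eauto; fail); try (exfalso; eapply He2; eauto; fail);
       try (exfalso; eapply Hl; eauto; fail); fail).
  - rewrite upd_other; auto. intro; subst. eapply He1; eauto.
  - rewrite upd_other; auto. intro; subst. eapply Hl; eauto.
Qed.

Lemma upd_upd_swap : forall (E : env) s s3,
  (fun x => upd (upd E s false) s3 false (swap s s3 x)) = upd (upd E s false) s3 false.
Proof.
  intros. apply env_swap_inv. unfold upd. repeat rewrite Nat.eqb_refl.
  destruct (Nat.eqb s s3); auto.
Qed.

Lemma upd_swap_loc : forall (E : env) s1 s2, E s1 = None -> E s2 = None ->
  forall x, upd E s2 false (swap s1 s2 x) = upd E s1 false x.
Proof.
  intros E s1 s2 H1 H2 x. unfold swap, upd.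
  destruct (Nat.eqb x s1) eqn:X1.
  - rewrite Nat.eqb_refl. apply Nat.eqb_eq in X1; subst; auto.
  - destruct (Nat.eqb x s2) eqn:X2.
    + apply Nat.eqb_eq in X2; subst. destruct (Nat.eqb s1 s2) eqn:X3; auto.
      apply Nat.eqb_eq in X3; subst. rewrite Nat.eqb_refl in X1; discriminate. congruence.
    + rewrite X2; auto.
Qed.

Lemma perm_in_split : forall (T : thread) R, In T R -> exists R', Permutation R (T :: R').
Proof.
  intros T R H. apply in_split in H as [l1 [l2 ->]]. exists (l1 ++ l2).
  symmetry. apply Permutation_middle.
Qed.

Lemma diamond : forall D, wf_defs D -> forall B X A C, wfc B X -> cstep D X A -> cstep D X C ->
  equiv B A C \/ exists A' C', cstep D A A' /\ cstep D C C' /\ equiv B A' C'.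
Proof.
  intros D HD B X A C [Hw1 [[L HL] Hw3]] HA HC.
  destruct HA as [P E T1 R1 a1 Q1 T1' Hp1 Hm1].
  inversion HC as [P0 E0 T2 R2 a2 Q2 T2' Hp2 Hm2]; subst P0 E0 C; clear HC.
  simpl in *.
  assert (HinP : forall T, In T (T1 :: R1) -> In T P).
  { intros T HT. apply Permutation_in with (T1 :: R1); [symmetry|]; auto. }
  assert (HinP2 : forall T, In T (T2 :: R2) -> In T P).
  { intros T HT. apply Permutation_in with (T2 :: R2); [symmetry|]; auto. }
  destruct (classic (T1 = T2)) as [Heq|Hne].
  - subst T2. left.
    assert (HR : Permutation R1 R2).
    { apply Permutation_cons_inv with T1. eapply perm_trans; [symmetry; eauto| auto]. }
    assert (Hdom : forall x, In x (fsig T1) -> E x <> None) by (intros x Hx; apply (Hw1 T1 x); auto; apply HinP; simpl; auto).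
    destruct (mstep_det D E T1 a1 Q1 T1' Hm1 a2 Q2 T2' Hm2 Hdom) as [[-> [-> ->]]|[s1 [s2 [-> [-> [Hs1 [Hs2 [-> ->]]]]]]]].
    + apply equiv_perm. constructor. apply Permutation_app_tail; auto.
    + exists (swap s1 s2), (swap s1 s2). split; [apply swap_bij|]. split; [|split]; simpl.
      * intros x Bx. apply swap_fix; intro; subst; apply (Hw3 _ Bx); auto.
      * intros x. apply upd_swap_loc; auto.
      * rewrite map_app. rewrite (map_rename_fix _ R1).
        -- constructor. apply Permutation_app_tail; auto.
        -- intros T x HT Hx. apply swap_fix; intro; subst; apply (Hw1 T _ (HinP T ltac:(simpl; auto)) Hx); auto.
  - right.
    assert (HT2 : In T2 R1).
    { assert (In T2 (T1 :: R1)) by (apply Permutation_in with P; auto; apply Permutation_in with (T2 :: R2); [symmetry|]; simpl; auto).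
      destruct H; [congruence|auto]. }
    destruct (perm_in_split _ _ HT2) as [R HR1].
    assert (HR2 : Permutation R2 (T1 :: R)).
    { apply Permutation_cons_inv with T2. eapply perm_trans; [symmetry; exact Hp2|].
      eapply perm_trans; [exact Hp1|]. eapply perm_trans; [constructor; exact HR1|]. apply perm_swap. }
    assert (Hd1 : forall x, In x (fsig T1) -> E x <> None) by (intros x Hx; apply (Hw1 T1 x); auto; apply HinP; simpl; auto).
    assert (Hd2 : forall x, In x (fsig T2) -> E x <> None) by (intros x Hx; apply (Hw1 T2 x); auto; apply HinP2; simpl; auto).
    assert (HdR : forall T x, In T R -> In x (fsig T) -> E x <> None).
    { intros T x HT Hx. apply (Hw1 T x); auto. apply HinP. right. apply Permutation_in with (T2 :: R); [symmetry; auto|right; auto]. }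
    pose proof (mstep_act_ok _ _ _ _ _ _ Hm1) as Ok1. pose proof (mstep_act_ok _ _ _ _ _ _ Hm2) as Ok2.
    assert (Em1 : forall s, a1 = AEmit s -> E s <> None) by (intros; apply Hd1; eapply mstep_emit_in; eauto).
    assert (Em2 : forall s, a2 = AEmit s -> E s <> None) by (intros; apply Hd2; eapply mstep_emit_in; eauto).
    destruct (classic (exists s, a1 = ALocal s /\ a2 = ALocal s)) as [[s [Ha1 Ha2]]|Hnc].
    +
      subst a1 a2. simpl in Ok1, Ok2.
      destruct (fresh_exists (s :: L)) as [s3 Hs3].
      assert (E3 : E s3 = None) by (destruct (E s3) eqn:X; auto; exfalso; apply Hs3; right; apply HL; congruence).
      assert (N3 : s3 <> s) by (intro; subst; apply Hs3; left; auto).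
      assert (Hinv : (fun x => E (swap s s3 x)) = E) by (apply env_swap_inv; congruence).
      assert (Hm2r : mstep D (upd E s false) T2 (ALocal s3) (map (rename (swap s s3)) Q2) (rename (swap s s3) T2')).
      { pose proof (mstep_rename D HD _ _ (swap_bij s s3) _ _ _ _ _ Hm2) as H.
        rewrite Hinv in H. simpl in H. rewrite swap_l in H. rewrite (rename_swap_fix E) in H; auto.
        eapply mstep_lift; eauto. intros; apply (apply_act_true E (ALocal s)); auto.
        simpl. rewrite upd_other; auto. }
      assert (Hm1r : mstep D (upd E s false) T1 (ALocal s3) (map (rename (swap s s3)) Q1) (rename (swap s s3) T1')).
      { pose proof (mstep_rename D HD _ _ (swap_bij s s3) _ _ _ _ _ Hm1) as H.
        rewrite Hinv in H. simpl in H. rewrite swap_l in H. rewrite (rename_swap_fix E) in H; auto.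
        eapply mstep_lift; eauto. intros; apply (apply_act_true E (ALocal s)); auto.
        simpl. rewrite upd_other; auto. }
      exists (rename (swap s s3) T2' :: (T1' :: R ++ Q1) ++ map (rename (swap s s3)) Q2, apply_act (upd E s false) (ALocal s3)).
      exists (rename (swap s s3) T1' :: (T2' :: R ++ Q2) ++ map (rename (swap s s3)) Q1, apply_act (upd E s false) (ALocal s3)).
      split; [|split].
      * apply (cs_intro D (T1' :: R1 ++ Q1) (upd E s false) T2 (T1' :: R ++ Q1)); auto.
        eapply perm_trans; [constructor; apply Permutation_app_tail; exact HR1|]. simpl. apply perm_swap.
      * apply (cs_intro D (T2' :: R2 ++ Q2) (upd E s false) T1 (T2' :: R ++ Q2)); auto.
        eapply perm_trans; [constructor; apply Permutation_app_tail; exact HR2|]. simpl. apply perm_swap.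
      * exists (swap s s3), (swap s s3). split; [apply swap_bij|]. split; [|split]; simpl.
        -- intros x Bx. apply swap_fix; intro; subst; apply (Hw3 _ Bx); auto.
        -- intros x. pose proof (upd_upd_swap E s s3) as HH. exact (f_equal (fun h => h x) HH).
        -- rewrite rename_swap_invol, !map_app, map_rename_swap_invol, map_rename_fix.
           ++ rewrite <- !app_assoc. apply perm_helper.
           ++ intros T x HT Hx. apply swap_fix; intro; subst; eapply HdR; eauto.
    +
      assert (Hl : forall s, a1 = ALocal s -> a2 <> ALocal s) by (intros s H1 H2; apply Hnc; eauto).
      destruct (act_commute E a1 a2 Ok1 Ok2 Em1 Em2 Hl) as [Hcomm Ok12].
      assert (Hl' : forall s, a2 = ALocal s -> a1 <> ALocal s) by (intros s H1 H2; apply Hnc; eauto).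
      destruct (act_commute E a2 a1 Ok2 Ok1 Em2 Em1 Hl') as [_ Ok21].
      exists (T2' :: (T1' :: R ++ Q1) ++ Q2, apply_act (apply_act E a1) a2).
      exists (T1' :: (T2' :: R ++ Q2) ++ Q1, apply_act (apply_act E a2) a1).
      split; [|split].
      * apply (cs_intro D (T1' :: R1 ++ Q1) (apply_act E a1) T2 (T1' :: R ++ Q1)).
        -- eapply perm_trans; [constructor; apply Permutation_app_tail; exact HR1|]. simpl. apply perm_swap.
        -- eapply mstep_lift; eauto. intros; apply apply_act_true; auto.
      * apply (cs_intro D (T2' :: R2 ++ Q2) (apply_act E a2) T1 (T2' :: R ++ Q2)).
        -- eapply perm_trans; [constructor; apply Permutation_app_tail; exact HR2|]. simpl. apply perm_swap.
        -- eapply mstep_lift; eauto. intros; apply apply_act_true; auto.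
      * rewrite Hcomm. simpl. rewrite <- !app_assoc. apply equiv_perm. apply perm_helper.
Qed.

Lemma claim : forall D, wf_defs D -> forall B n X N, wfc B X -> csteps D n X N -> normal D N ->
  forall Y, cstep D X Y -> exists m N', n = S m /\ csteps D m Y N' /\ equiv B N N'.
Proof.
  intros D HD B n. induction n; intros X N Hw Hr Hn Y Hs.
  - inversion Hr; subst. exfalso; eapply Hn; eauto.
  - inversion Hr as [|n' X0 A N0 HA Hr']; subst.
    destruct (diamond D HD B X A Y Hw HA Hs) as [He|[A' [Y' [H1 [H2 H3]]]]].
    + destruct (csteps_equiv D HD B _ _ _ _ Hr' He) as [N' [H4 H5]].
      exists n, N'; auto.
    + destruct (IHn A N (wfc_cstep D HD B _ _ Hw HA) Hr' Hn A' H1) as [k [N'' [-> [H4 H5]]]].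
      destruct (csteps_equiv D HD B _ _ _ _ H4 H3) as [N3 [H6 H7]].
      exists (S k), N3. repeat split; auto.
      * econstructor; eauto.
      * eapply equiv_trans; eauto.
Qed.

Lemma unique_nf : forall D, wf_defs D -> forall B n X N1, wfc B X -> csteps D n X N1 -> normal D N1 ->
  forall m N2, csteps D m X N2 -> normal D N2 -> equiv B N1 N2.
Proof.
  intros D HD B n. induction n; intros X N1 Hw H1 Hn1 m N2 H2 Hn2.
  - inversion H1; subst. inversion H2; subst; [apply equiv_refl|]. exfalso; eapply Hn1; eauto.
  - inversion H2 as [|m' X0 Y N0 HY H2']; subst.
    + inversion H1; subst. exfalso; eapply Hn2; eauto.
    + destruct (claim D HD B _ _ _ Hw H1 Hn1 Y HY) as [k [N1' [Hk [H3 H4]]]].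
      inversion Hk; subst.
      eapply equiv_trans; [exact H4|]. apply (IHn Y N1' (wfc_cstep D HD B _ _ Hw HY) H3 (normal_equiv D HD B _ _ H4 Hn1) m' N2 H2' Hn2).
Qed.

Lemma perm_csteps : forall D n P P' E N E2, Permutation P P' -> csteps D n (P', E) (N, E2) ->
  exists N', csteps D n (P, E) (N', E2) /\ Permutation N' N.
Proof.
  intros D n P P' E N E2 Hp H. inversion H; subst.
  - exists P; split; [constructor| auto].
  - exists N; split; auto. econstructor; eauto.
    inversion H0; subst. eapply cs_intro; [eapply perm_trans; eauto | eauto].
Qed.

Lemma mstar_csteps : forall D E T Q T' E', mstar D E T Q T' E' ->
  forall R, exists n, csteps D n (T :: R, E) (T' :: R ++ Q, E').
Proof.
  induction 1; intros R.
  - exists 0. rewrite app_nil_r. constructor.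
  - destruct (IHmstar (R ++ Q1)) as [n Hn]. exists (S n). econstructor.
    + apply (cs_intro D (T :: R) E T R a Q1 T1); auto.
    + rewrite app_assoc. exact Hn.
Qed.

Lemma instant_micro : forall D P E P'' E'', instant D P E P'' E'' ->
  exists n N, csteps D n (P, E) (N, E'') /\ normal D (N, E'') /\ Permutation (map (abort E'') N) P''.
Proof.
  intros D. induction 1.
  - exists 0, P. split; [constructor|]. split; auto.
    intros Y Hs. inversion Hs; subst. eapply stuck_nomstep; [apply H|eauto].
    apply Permutation_in with (T :: Rest); [symmetry; auto| simpl; auto].
  - destruct IHinstant as [n [N [H2 [H3 H4]]]].
    destruct (mstar_csteps D E T P' T' E' (step_mstar _ _ _ _ _ _ H0) (Pa ++ Pb)) as [k Hk].
    assert (Hp : Permutation (T' :: (Pa ++ Pb) ++ P') (Pa ++ T' :: Pb ++ P')).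
    { rewrite <- app_assoc. apply Permutation_middle. }
    destruct (perm_csteps D n _ _ E' N E'' Hp H2) as [N' [H5 H6]].
    assert (Hp2 : Permutation (Pa ++ T :: Pb) (T :: Pa ++ Pb)) by (symmetry; apply Permutation_middle).
    destruct (perm_csteps D (k + n) _ _ E N' E'' Hp2 (csteps_trans _ _ _ _ Hk _ _ H5)) as [N2 [H7 H8]].
    exists (k + n), N2. split; auto. split.
    + intros Y Hs. inversion Hs; subst. apply (H3 (T'0 :: Rest ++ Q, apply_act E'' a)).
      eapply cs_intro; [|eauto]. eapply perm_trans; [|eauto].
      symmetry. eapply perm_trans; [exact H8| exact H6].
    + eapply perm_trans; [|eauto]. apply Permutation_map. eapply perm_trans; [exact H8| exact H6].
Qed.

Lemma memb_in : forall s l, memb s l = true <-> In s l.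
Proof.
  intros s l. unfold memb. rewrite existsb_exists. split.
  - intros [x [H1 H2]]. apply Nat.eqb_eq in H2; subst; auto.
  - intros H; exists s; split; auto. apply Nat.eqb_refl.
Qed.

Lemma init_wfc : forall Int I P, (forall s, I s = true -> In s Int) ->
  wfc (fun x => init_env Int I P x <> None) (P, init_env Int I P).
Proof.
  intros Int I P HI. split; [|split]; simpl; auto.
  - intros T x HT Hx. unfold init_env. destruct (I x); [discriminate|].
    assert (memb x (Int ++ sigP P) = true) as ->; [|discriminate].
    apply memb_in. apply in_or_app; right. unfold sigP. apply in_flat_map; eauto.
  - exists (Int ++ sigP P). intros x Hx. unfold init_env in Hx.
    destruct (I x) eqn:Ix; [apply in_or_app; left; auto|].
    destruct (memb x (Int ++ sigP P)) eqn:Hm; [apply memb_in; auto|congruence].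
Qed.

Lemma det_step : forall Int D P I O1 O2 Q1 Q2, wf_defs D ->
  (forall s, I s = true -> In s Int) ->
  trans Int D P I O1 Q1 -> trans Int D P I O2 Q2 ->
  (forall s, O1 s = O2 s) /\ eq_up_to_renaming Int Q1 Q2.
Proof.
  intros Int D P I O1 O2 Q1 Q2 HD HI [E1 [Hi1 ->]] [E2 [Hi2 ->]].
  set (B := fun x => init_env Int I P x <> None).
  assert (HInt : forall x, In x Int -> B x).
  { intros x Hx. unfold B, init_env. destruct (I x); [discriminate|].
    assert (memb x (Int ++ sigP P) = true) as ->; [|discriminate].
    apply memb_in; apply in_or_app; auto. }
  destruct (instant_micro D _ _ _ _ Hi1) as [n1 [N1 [R1 [Nn1 Hp1]]]].
  destruct (instant_micro D _ _ _ _ Hi2) as [n2 [N2 [R2 [Nn2 Hp2]]]].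
  destruct (unique_nf D HD B n1 _ _ (init_wfc Int I P HI) R1 Nn1 n2 _ R2 Nn2)
    as [f [g [[Hgf Hfg] [Hb [He Hp]]]]]. simpl in *.
  assert (Hfix : forall x, In x Int -> f x = x) by (intros; apply Hb; auto).
  split.
  - intros s. unfold output. destruct (memb s Int) eqn:Hm; simpl; auto.
    apply memb_in in Hm. rewrite <- (He s), Hfix; auto.
  - exists f. split; [|split].
    + intros x y _ _ Hxy. rewrite <- (Hgf x), <- (Hgf y), Hxy; auto.
    + intros x _ [Hx|Hx]; auto.
      rewrite <- (Hgf x) at 2. rewrite <- (Hfix (f x) Hx) at 2. rewrite Hgf. reflexivity.
    + eapply perm_trans; [apply Permutation_map; symmetry; exact Hp1|].
      rewrite map_map. rewrite (map_ext _ (fun T => abort E2 (rename f T))) by (intros; apply rename_abort; auto).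
      rewrite <- map_map. eapply perm_trans; [apply Permutation_map; exact Hp|]. exact Hp2.
Qed.

Lemma all_det : forall Int D, wf_defs D -> forall P, deterministic Int D P.
Proof.
  intros Int D HD. cofix CIH. intros P. constructor.
  intros I O1 O2 Q1 Q2 HI H1 H2.
  destruct (det_step Int D P I O1 O2 Q1 Q2 HD HI H1 H2) as [Ho Hr].
  split; [exact Ho|]. split; [exact Hr|]. apply CIH.
Qed.

Theorem proposition1 (Int : list signal) (D : defs) (P : program) :
  wf_defs D -> P <> nil -> deterministic Int D P.
Proof. intros HD _. apply all_det; auto. Qed.
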